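(* For a positive integer $k$ let $A(k)=\{(\frac{c}{k},\frac{d}{k}): c,d\in\mathbb{N}\cup\{0\},\ \frac{c}{k}+\frac{d}{k}\le 1\}$, viewed as a collection of alternatives. Let $x\approx 0.39$ be the unique solution in $[0,\frac12]$ of $x^3-x+\frac13=0$. Then for every $k$ and every $\delta>0$, all pure Nash equilibrium outcomes of $\Gamma_{\mathcal{SA}_\delta}(A(k))$ are $(\delta+\frac1k)$-close to the segment $\mathrm{conv}((x,1-x),(1-x,x))$.
   Context: Two players bargain over a finite collection of alternatives $A=(a^j)_{j\in[n]}\subset[0,1]^2$, $a^j_i$ being player $i$'s utility. The mechanism $\mathcal{SA}_\delta$ ($0<\delta\le1$): each player submits $L_i\subseteq[n]$; the index is drawn from the uniform distribution $UN([n])$ if $L_1=L_2=\emptyset$; from $UN(L_1\cup L_2)$ if $L_1\cap L_2=\emptyset\ne L_1\cup L_2$; and from $(1-\delta)UN(L_1\cap L_2)+\delta\,UN(L_1\cup L_2)$ if $L_1\cap L_2\neq\emptyset$. With risk-neutral players this defines a game $\Gamma_{\mathcal{SA}_\delta}(A)$ with expected-utility payoffs; an equilibrium outcome is the vector of expected utilities. *)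

(* Defs.v *)
From HB Require Import structures.
From mathcomp Require Import all_boot all_order all_algebra.
Set Implicit Arguments. Unset Strict Implicit. Unset Printing Implicit Defensive.
Import Order.TTheory GRing.Theory Num.Theory.
Local Open Scope ring_scope.

Definition avg (R : fieldType) (T : finType) (S : {set T}) (f : T -> R) : R :=
  (\sum_(t in S) f t) / #|S|%:R.

(* Expected utility of f under the mechanism SA_delta given the submitted
   lists L1, L2 (subsets of the index set T). *)
Definition SA_payoff (R : fieldType) (T : finType) (delta : R)
  (L1 L2 : {set T}) (f : T -> R) : R :=
  if (L1 == set0) && (L2 == set0) then avg [set: T] f
  else if L1 :&: L2 == set0 then avg (L1 :|: L2) f
  else (1 - delta) * avg (L1 :&: L2) f + delta * avg (L1 :|: L2) f.

(* Pure Nash equilibrium of the game Gamma_{SA_delta}(A), where the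
   alternatives are indexed by T and a1, a2 are the players' utilities. *)
Definition SA_pure_NE (R : realFieldType) (T : finType) (delta : R)
  (a1 a2 : T -> R) (L1 L2 : {set T}) : Prop :=
  (forall L1' : {set T}, SA_payoff delta L1' L2 a1 <= SA_payoff delta L1 L2 a1) /\
  (forall L2' : {set T}, SA_payoff delta L1 L2' a2 <= SA_payoff delta L1 L2 a2).

(* Index set of A(k): pairs (c,d) of naturals with c + d <= k. *)
Definition Aidx (k : nat) : finType :=
  {p : 'I_k.+1 * 'I_k.+1 | (p.1 + p.2 <= k)%N}.

Definition Ak1 (R : fieldType) (k : nat) (p : Aidx k) : R :=
  ((val p).1 : nat)%:R / k%:R.
Definition Ak2 (R : fieldType) (k : nat) (p : Aidx k) : R :=
  ((val p).2 : nat)%:R / k%:R.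

Definition dist2 (R : rcfType) (p q : R * R) : R :=
  Num.sqrt ((p.1 - q.1) ^+ 2 + (p.2 - q.2) ^+ 2).

Definition close_to_segment (R : rcfType) (eps : R) (u v p : R * R) : Prop :=
  exists t : R, 0 <= t <= 1 /\
    dist2 p (t * u.1 + (1 - t) * v.1, t * u.2 + (1 - t) * v.2) <= eps.

(* Main.v *)
Require Import Defs.
From HB Require Import structures.
From mathcomp Require Import all_boot all_order all_algebra.
From mathcomp Require Import zify.
From mathcomp.algebra_tactics Require Import ring lra.
Import Order.TTheory GRing.Theory Num.Theory.
Local Open Scope ring_scope.
Set Implicit Arguments. Unset Strict Implicit.

Definition Fp (R : fieldType) (K t n : R) : R :=
  - (n * (n - 1) * (2 * n - 1)) / 6 + (K + 1 + t) * (n * (n - 1)) / 2 - (K + 1) * t * n.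
Definition Hp (R : fieldType) (K J t n : R) : R :=
  n * (n - 1) * (2 * n - 1) / 6 - (K + 1 - J + t) * (n * (n - 1)) / 2 + (K + 1 - J) * t * n.

Lemma sum_Aidx (R : nmodType) (k : nat) (F : 'I_k.+1 * 'I_k.+1 -> R) :
  \sum_(p : Aidx k) F (val p) = \sum_(q : 'I_k.+1 * 'I_k.+1 | (q.1 + q.2 <= k)%N) F q.
Proof.
rewrite (reindex_omap (val : Aidx k -> _) insub); last first.
  by move=> i Pi; rewrite insubT.
apply: eq_bigl => -[i iA] /=.
by rewrite insubT /= iA; apply/esym/eqP; congr Some; apply: val_inj.
Qed.

Lemma sum_grid (R : nmodType) (k : nat) (h : nat -> nat -> R) :
  \sum_(p : Aidx k) h (val p).1 (val p).2 =
  \sum_(c < k.+1) \sum_(d < k.+1) (if (c + d <= k)%N then h c d else 0).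
Proof.
rewrite (sum_Aidx (fun q => h q.1 q.2)) big_mkcond.
by rewrite (pair_bigA _ (fun (c d : 'I_k.+1) => if (c + d <= k)%N then h c d else 0)).
Qed.

Lemma sum_swap (R : nmodType) (k : nat) (h : nat -> nat -> R) :
  \sum_(p : Aidx k) h (val p).1 (val p).2 = \sum_(p : Aidx k) h (val p).2 (val p).1.
Proof.
rewrite (@sum_grid _ k h) (@sum_grid _ k (fun a b => h b a)) exchange_big.
by apply: eq_bigr => c _; apply: eq_bigr => d _; rewrite addnC.
Qed.

Lemma cnt (R : ringType) (a b n : nat) :
  \sum_(d < n) (if (a <= d < b)%N then 1 else 0 : R) = (minn n b - a)%:R.
Proof.
elim: n => [|n IH]; first by rewrite big_ord0 min0n sub0n.
rewrite big_ord_recr /= IH.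
have -> : (minn n.+1 b - a = (minn n b - a) + ((a <= n < b)%N : nat))%N.
  case: (leqP a n) => h1; case: (ltnP n b) => h2 /=; lia.
by rewrite natrD; case: (a <= n < b)%N.
Qed.

Lemma SE (R : numFieldType) (K t : R) (j n : nat) :
  \sum_(c < n) (if (j <= c)%N then (c%:R - t) * (K + 1 - c%:R) else 0) =
  if (j <= n)%N then Fp K t n%:R - Fp K t j%:R else 0.
Proof.
elim: n => [|n IH]; first by rewrite big_ord0; case: j => [|j] /=; rewrite ?subrr.
rewrite big_ord_recr /= IH.
case: (ltngtP j n) => h.
- have -> : (j <= n.+1)%N by lia.
  by rewrite -addn1 natrD /Fp; field.
- case: (leqP j n.+1) => h'; last by rewrite addr0.
  have -> : j = n.+1 by lia.
  by rewrite subrr addr0.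
- by rewrite h leqnSn -addn1 natrD /Fp; field.
Qed.

Lemma SD (R : numFieldType) (K J t : R) (j n : nat) :
  \sum_(c < n) (if (c < j)%N then (t - c%:R) * (K + 1 - J - c%:R) else 0) =
  Hp K J t (minn n j)%:R.
Proof.
elim: n => [|n IH]; first by rewrite big_ord0 min0n /Hp; field.
rewrite big_ord_recr /= IH.
case: (boolP (n < j)%N) => h.
- have -> : minn n.+1 j = n.+1 by lia.
  have -> : minn n j = n by lia.
  by rewrite -addn1 natrD /Hp; field.
- have -> : minn n.+1 j = minn n j by lia.
  by rewrite addr0.
Qed.

Lemma xle (R : realFieldType) (x : R) : 0 <= x <= 2^-1 -> x ^+ 3 - x + 3^-1 = 0 -> x <= 2/5.
Proof.
move=> /andP[h0 h1] hr.
rewrite leNgt; apply/negP => hx.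
have h2 : 0 < (x - 2/5) * (1 - (x^+2 + x * (2/5) + 4/25)).
  apply: mulr_gt0; first lra. nra.
nra.
Qed.

Lemma poly_main (R : realFieldType) (x K J t : R) :
  0 <= x <= 2^-1 -> x ^+ 3 - x + 3^-1 = 0 -> 1 <= K -> 0 <= t -> J - 1 < t -> t <= J ->
  t < K * x - 2^-1 -> 0 < Fp K t (K + 1) - Fp K t J - Hp K J t J.
Proof.
move=> hx hr hK ht hJ1 hJ2 htx.
have x25 := xle hx hr.
move: hx => /andP[x0 x1].
have -> : Fp K t (K + 1) - Fp K t J - Hp K J t J =
  (K^+3 - 3*K^+2*t + 3*K^+2 + 2*K - 9*K*t - 6*t + 3*J^+2*(2*t-J+1)) / 6.
  by rewrite /Fp /Hp; field.
have h3 : t^+2 * (t + 1) <= J^+2 * (2*t - J + 1).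
  have e : J^+2 * (2*t - J + 1) - t^+2 * (t+1) = (J - t) * (t^+2 + t * (2 - (J - t)) + (J-t) * (1 - (J - t))) :> R by ring.
  rewrite -subr_ge0 e; apply: mulr_ge0; first lra.
  apply: addr_ge0; [apply: addr_ge0|]; [nra | apply: mulr_ge0; lra | apply: mulr_ge0; lra].
have hKx : 0 <= K * x - t by lra.
have hr3 : K^+3 - 3 * K^+3 * x + 3 * K^+3 * x^+3 = 0.
  have -> : K^+3 - 3 * K^+3 * x + 3 * K^+3 * x^+3 = 3 * K^+3 * (x ^+ 3 - x + 3^-1) by field.
  by rewrite hr mulr0.
have tle : t <= K * x by lra.
have h4 : K^+3 - 3*K^+2*t + 3*t^+3 >= (K * x - t) * (3 * K^+2 * (1 - 3 * x^+2)).
  have e : K^+3 - 3*K^+2*t + 3*t^+3 = (K * x - t) * (3 * K^+2 - 3 * ((K*x)^+2 + (K * x) * t + t^+2)).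
    by rewrite -[LHS]subr0 -hr3; ring.
  rewrite e; apply: ler_wpM2l => //.
  have : t^+2 <= (K * x)^+2 by rewrite !expr2; apply: ler_pM; lra.
  have : (K * x) * t <= (K * x)^+2 by rewrite expr2; apply: ler_wpM2l; nra.
  have -> : (K * x)^+2 = K^+2 * x^+2 by ring.
  lra.
have K2 : 1 <= K^+2 by nra.
have h5 : (K * x - t) * (3 * K^+2 * (1 - 3 * x^+2)) >= 2^-1 * (3 * K^+2 * (1 - 3 * (2/5)^+2)).
  apply: ler_pM; [lra | | lra | ].
  - apply: mulr_ge0; first nra. rewrite subr_ge0. nra.
  - apply: ler_wpM2l; first nra. rewrite lerD2l lerN2. apply: ler_wpM2l => //. nra.
have h6 : 0 <= K^+2 - 3 * K * t + t^+2 + 1/25 * K^+2.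
  have e : K^+2 - 3 * K * t + t^+2 + 1/25 * K^+2 = (2/5 * K - t) * (13/5 * K - t) :> R by field.
  have : t <= 2/5 * K by nra.
  rewrite e; move=> ?; apply: mulr_ge0; lra.
have h7 : t <= 2/5 * K by nra.
have hKK : K <= K^+2 by rewrite expr2; rewrite ler_pMr; lra.
have e1 : t^+2 * (t + 1) = t^+3 + t^+2 by ring.
rewrite e1 in h3.
have e2 : 2^-1 * (3 * K ^+ 2 * (1 - 3 * (2 / 5) ^+ 2)) = 39/50 * K^+2 :> R by field.
rewrite e2 in h5.
apply: divr_gt0; last lra.
lra.
Qed.


Lemma nH1 (c d k : nat) : (c < k.+1)%N -> (c + d <= k)%N = (d < k.+1 - c)%N.
Proof. move=> h; apply/idP/idP => h'; lia. Qed.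
Lemma nH2 (c j k : nat) : (c < j)%N -> (j + j <= k)%N ->
  (minn k.+1 (k.+1 - c) - j = k.+1 - (c + j))%N /\ (c + j <= k.+1)%N.
Proof. move=> h1 h2; split; lia. Qed.
Lemma nH3 (c k : nat) : (c < k.+1)%N -> (minn k.+1 (k.+1 - c) - 0 = k.+1 - c)%N /\ (c <= k.+1)%N.
Proof. move=> h; split; lia. Qed.

Lemma grid_ineq (R : realFieldType) (x b : R) (k : nat) :
  0 <= x <= 2^-1 -> x ^+ 3 - x + 3^-1 = 0 -> (0 < k)%N -> 0 <= b ->
  b < x - (2 * k%:R)^-1 ->
  \sum_(p : Aidx k) (if (@Ak1 R k p < b) && (b <= @Ak2 R k p) then b - @Ak1 R k p else 0) <
  \sum_(p : Aidx k) (if b <= @Ak1 R k p then @Ak1 R k p - b else 0).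
Proof.
move=> hx hr k0 b0 bx.
have kpos : 0 < k%:R :> R by rewrite ltr0n.
have x25 := xle hx hr.
set kR := k%:R : R.
have hk1 : 1 <= kR by rewrite /kR ler1n.
pose P n := (b <= n%:R / kR).
have exP : exists n, P n.
  exists k; rewrite /P divff ?lt0r_neq0 //.
  have : 0 < (2 * kR)^-1 by rewrite invr_gt0; lra.
  lra.
case: (ex_minnP exP) => j Pj jmin.
have jprop : forall n : nat, (b <= n%:R / kR) = (j <= n)%N.
  move=> n; apply/idP/idP => [/jmin //|hjn].
  apply: le_trans Pj _; rewrite ler_pM2r ?invr_gt0 // ler_nat //.
set t := b * kR.
have tj : t <= j%:R by move: Pj; rewrite /P ler_pdivlMr.
have jt : j%:R - 1 < t.
  case: j Pj jmin tj jprop => [|j] Pj jmin tj jprop.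
    rewrite /t; have : 0 <= b * kR by apply: mulr_ge0; lra.
    lra.
  have := jprop j; rewrite ltnn => /negbT; rewrite -ltNge ltr_pdivrMr // -/t.
  by rewrite -natr1 addrK.
have tx : t < kR * x - 2^-1.
  have : b * kR < (x - (2 * kR)^-1) * kR by rewrite ltr_pM2r.
  have -> : (x - (2 * kR)^-1) * kR = kR * x - 2^-1 by field; lra.
  by [].
have jk : (j + j <= k)%N.
  have : (j + j)%:R < k%:R + 1 :> R by rewrite natrD -/kR; nra.
  by rewrite natr1 ltr_nat ltnS.
have eD : \sum_(p : Aidx k) (if (@Ak1 R k p < b) && (b <= @Ak2 R k p) then b - @Ak1 R k p else 0)
   = Hp kR j%:R t j%:R / kR.
  rewrite /Ak1 /Ak2 -/kR (@sum_grid _ k (fun c d => if (c%:R / kR < b) && (b <= d%:R / kR) then b - c%:R / kR else 0)).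
  rewrite (eq_bigr (fun c : 'I_k.+1 => (if (c < j)%N then (t - c%:R) * (kR + 1 - j%:R - c%:R) else 0) / kR)).
    by rewrite -mulr_suml SD; congr (Hp _ _ _ _ / _); congr (_%:R); lia.
  move=> c _.
  have hc := ltn_ord c.
  transitivity ((\sum_(d < k.+1) (if (j <= d < k.+1 - c)%N then 1 else 0)) * (if (c < j)%N then (b - c%:R / kR) else 0)).
    rewrite mulr_suml; apply: eq_bigr => d _; rewrite ltNge !jprop -ltnNge.
    rewrite nH1 //.
    by case: (d < k.+1 - c)%N; case: (j <= d)%N; case: (c < j)%N; rewrite /= ?andbF ?mul1r ?mul0r ?mulr0.
  rewrite cnt.
  case: (boolP (c < j)%N) => hcj; last by rewrite mulr0 mul0r.
  have [-> hcj'] := nH2 hcj jk.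
  rewrite natrB //.
  rewrite natrD -natr1 -/kR /t; field; lra.
have eE : \sum_(p : Aidx k) (if b <= @Ak1 R k p then @Ak1 R k p - b else 0)
   = (Fp kR t (kR + 1) - Fp kR t j%:R) / kR.
  rewrite /Ak1 /Ak2 -/kR (@sum_grid _ k (fun c d => if b <= c%:R / kR then c%:R / kR - b else 0)).
  rewrite (eq_bigr (fun c : 'I_k.+1 => (if (j <= c)%N then (c%:R - t) * (kR + 1 - c%:R) else 0) / kR)).
    rewrite -mulr_suml SE natr1 -/kR.
    by have -> : (j <= k.+1)%N by lia.
  move=> c _.
  have hc := ltn_ord c.
  transitivity ((\sum_(d < k.+1) (if (0 <= d < k.+1 - c)%N then 1 else 0)) * (if (j <= c)%N then (c%:R / kR - b) else 0)).
    rewrite mulr_suml; apply: eq_bigr => d _; rewrite !jprop.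
    rewrite nH1 //.
    by case: (d < k.+1 - c)%N; case: (j <= c)%N; rewrite /= ?mul1r ?mul0r ?mulr0.
  rewrite cnt.
  case: (boolP (j <= c)%N) => hcj; last by rewrite mulr0 mul0r.
  have [-> hck] := nH3 hc.
  rewrite natrB //.
  rewrite -natr1 -/kR /t; field; lra.
rewrite eD eE ltr_pM2r ?invr_gt0 // -subr_gt0.
have -> : Fp kR t (kR + 1) - Fp kR t j%:R - Hp kR j%:R t j%:R = Fp kR t (kR + 1) - Fp kR t j%:R - Hp kR j%:R t j%:R by [].
have ht : 0 <= t by rewrite /t; apply: mulr_ge0; lra.
exact: (poly_main hx hr hk1 ht jt tj tx).
Qed.

Section Avg.
Variables (R : realFieldType) (T : finType).
Implicit Types (S : {set T}) (f g : T -> R).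

Lemma avg_mul S f : S != set0 -> avg S f * #|S|%:R = \sum_(t in S) f t.
Proof.
move=> hS; rewrite /avg divfK // pnatr_eq0 -lt0n card_gt0 //.
Qed.

Lemma avgU1 S f j : j \notin S -> S != set0 ->
  avg (j |: S) f * (#|S|%:R + 1) = avg S f * #|S|%:R + f j.
Proof.
move=> jS hS.
have hjS : j |: S != set0 by apply/set0Pn; exists j; rewrite setU11.
have := avg_mul f hjS; rewrite cardsU1 jS /= add1n -natr1 => ->.
by rewrite avg_mul // (big_setU1 _ jS) /= addrC.
Qed.

Lemma card_pos S : S != set0 -> 0 < #|S|%:R :> R.
Proof. by move=> hS; rewrite ltr0n card_gt0. Qed.

Lemma avg_grow S f j : j \notin S -> S != set0 ->
  avg (j |: S) f <= avg S f -> f j <= avg S f.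
Proof.
move=> jS hS h; have e := avgU1 f jS hS; have n0 := card_pos hS.
have : avg (j |: S) f * (#|S|%:R + 1) <= avg S f * (#|S|%:R + 1).
  by rewrite ler_wpM2r //; lra.
rewrite e; nra.
Qed.

Lemma avg_shrink S f j : j \notin S -> S != set0 ->
  avg S f <= avg (j |: S) f -> avg (j |: S) f <= f j.
Proof.
move=> jS hS h; have e := avgU1 f jS hS; have n0 := card_pos hS.
have : avg S f * #|S|%:R <= avg (j |: S) f * #|S|%:R by rewrite ler_wpM2r //; lra.
lra.
Qed.

Lemma avg1 f j : avg [set j] f = f j.
Proof. by rewrite /avg big_set1 cards1 divr1. Qed.

Lemma avg_le S f M : S != set0 -> (forall j, j \in S -> f j <= M) -> avg S f <= M.
Proof.
move=> hS h; rewrite /avg ler_pdivrMr ?card_pos //.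
have -> : M * #|S|%:R = \sum_(t in S) M by rewrite sumr_const mulr_natr.
by apply: ler_sum.
Qed.

Lemma avg_ge S f M : S != set0 -> (forall j, j \in S -> M <= f j) -> M <= avg S f.
Proof.
move=> hS h; rewrite /avg ler_pdivlMr ?card_pos //.
have -> : M * #|S|%:R = \sum_(t in S) M by rewrite sumr_const mulr_natr.
by apply: ler_sum.
Qed.

Lemma avg_eq S f : (forall j, j \in S -> f j <= avg S f) ->
  forall j, j \in S -> f j = avg S f.
Proof.
move=> h j jS.
have hS : S != set0 by apply/set0Pn; exists j.
have e : \sum_(t in S) (avg S f - f t) = 0.
  by rewrite sumrB sumr_const -avg_mul // mulr_natr subrr.
have H0 : forall i, i \in S -> 0 <= avg S f - f i by move=> i hi; rewrite subr_ge0 h.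
have := psumr_eq0P H0 e jS.
by move/eqP; rewrite subr_eq0 => /eqP.
Qed.

Lemma avgD S f g : avg S (fun t => f t + g t) = avg S f + avg S g.
Proof. by rewrite /avg big_split /= mulrDl. Qed.

Lemma avg_01 S f : (forall j, 0 <= f j <= 1) -> 0 <= avg S f <= 1.
Proof.
move=> h; case: (eqVneq S set0) => [->|hS].
  by rewrite /avg big_set0 mul0r lexx ler01.
apply/andP; split; [apply: avg_ge|apply: avg_le] => // j _; by case/andP: (h j).
Qed.

End Avg.

Lemma cancel1 (R : realFieldType) (d a u : R) : d < 1 -> (1 - d) * a + d * u <= u -> a <= u.
Proof.
move=> h1 h; rewrite -(ler_pM2l (_ : 0 < 1 - d)); last by lra.
lra.
Qed.

Lemma cancel2 (R : realFieldType) (d a u : R) : 0 < d -> d * a <= d * u -> a <= u.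
Proof. by move=> h0; rewrite ler_pM2l. Qed.

Lemma cancel3 (R : realFieldType) (d a m B : R) : d < 1 ->
  (1 - d) * a + d * B <= (1 - d) * m + d * B -> a <= m.
Proof.
move=> h1 h; rewrite -(ler_pM2l (_ : 0 < 1 - d)); last by lra.
lra.
Qed.

Lemma cancel4 (R : realFieldType) (d m B : R) : d < 1 ->
  B <= (1 - d) * m + d * B -> B <= m.
Proof.
move=> h1 h; rewrite -(ler_pM2l (_ : 0 < 1 - d)); last by lra.
lra.
Qed.

Lemma cancel5 (R : realFieldType) (d a m B : R) : 0 < d ->
  (1 - d) * m + d * a <= (1 - d) * m + d * B -> a <= B.
Proof.
move=> h1 h; rewrite -(ler_pM2l h1).
lra.
Qed.

Section Game.
Variables (R : realFieldType) (T : finType) (d : R).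
Hypotheses (hd0 : 0 < d) (hd1 : d < 1).

Lemma pay_sym (L1 L2 : {set T}) f : SA_payoff d L1 L2 f = SA_payoff d L2 L1 f.
Proof. by rewrite /SA_payoff setIC setUC andbC. Qed.

Lemma pay_I0 (L1 L2 : {set T}) f : L1 :&: L2 = set0 -> L1 :|: L2 != set0 ->
  SA_payoff d L1 L2 f = avg (L1 :|: L2) f.
Proof.
move=> hI hU; rewrite /SA_payoff hI eqxx.
case: (eqVneq L1 set0) => [e1|//]; case: (eqVneq L2 set0) => [e2|//].
by move: hU; rewrite e1 e2 setU0 eqxx.
Qed.

Lemma pay_I (L1 L2 : {set T}) f : L1 :&: L2 != set0 ->
  SA_payoff d L1 L2 f = (1 - d) * avg (L1 :&: L2) f + d * avg (L1 :|: L2) f.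
Proof.
move=> hI; rewrite /SA_payoff (negbTE hI).
case: (eqVneq L1 set0) => [e1|//]; case: (eqVneq L2 set0) => [e2|//].
by move: hI; rewrite e1 e2 setI0 eqxx.
Qed.

Lemma set1_neq0 (j : T) : [set j] != set0.
Proof. by apply/set0Pn; exists j; rewrite set11. Qed.

Variables (f : T -> R) (L1 L2 : {set T}).
Hypothesis hBR : forall L1', SA_payoff d L1' L2 f <= SA_payoff d L1 L2 f.

Section Type1.
Hypotheses (hI : L1 :&: L2 = set0) (hU : L1 :|: L2 != set0).

Lemma disj y : y \in L1 -> (y \in L2) = false.
Proof. by move=> y1; apply/negP=> y2; move/setP: hI => /(_ y); rewrite !inE y1 y2. Qed.

Lemma t1_pay : SA_payoff d L1 L2 f = avg (L1 :|: L2) f.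
Proof. exact: pay_I0. Qed.

Lemma t1a j : j \in L2 -> f j <= avg (L1 :|: L2) f.
Proof.
move=> hj.
have e1 : (j |: L1) :&: L2 = [set j].
  apply/setP => y; rewrite !inE; case: (eqVneq y j) => [->|hy] /=; first by rewrite hj.
  by case: (boolP (y \in L1)) => // /disj ->.
have e2 : (j |: L1) :|: L2 = L1 :|: L2.
  apply/setP => y; rewrite !inE; case: (eqVneq y j) => [->|hy] /=; first by rewrite hj orbT.
  by [].
have := hBR (j |: L1); rewrite t1_pay pay_I e1 ?set1_neq0 // e2 avg1 => h.
exact: cancel1 hd1 h.
Qed.

Lemma t1b j : j \notin L1 :|: L2 -> f j <= avg (L1 :|: L2) f.
Proof.
move=> hj.
have hj2 : j \notin L2 by move: hj; rewrite inE negb_or => /andP[].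
have e1 : (j |: L1) :&: L2 = set0.
  apply/setP => y; rewrite !inE; case: (eqVneq y j) => [->|hy] /=; first by rewrite (negbTE hj2).
  by case: (boolP (y \in L1)) => // /disj ->.
have hU' : (j |: L1) :|: L2 != set0 by apply/set0Pn; exists j; rewrite !inE eqxx.
have := hBR (j |: L1); rewrite t1_pay pay_I0 // -setUA => h.
exact: avg_grow hj hU h.
Qed.

Lemma t1c j : j \in L1 -> (L1 :|: L2) :\ j != set0 -> avg (L1 :|: L2) f <= f j.
Proof.
move=> hj hne.
have hj2 : j \notin L2 by rewrite disj.
have e1 : (L1 :\ j) :&: L2 = set0.
  apply/setP => y; rewrite !inE; case: (boolP (y \in L1)) => /=; last by rewrite andbF.
  by move/disj ->; rewrite andbF.
have e2 : (L1 :\ j) :|: L2 = (L1 :|: L2) :\ j.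
  apply/setP => y; rewrite !inE; case: (eqVneq y j) => [->|hy] /=; first by rewrite (negbTE hj2).
  by [].
have := hBR (L1 :\ j); rewrite t1_pay pay_I0 // ?e2 // => h.
have jU : j \in L1 :|: L2 by rewrite inE hj.
have jn : j \notin (L1 :|: L2) :\ j by rewrite setD11.
have := avg_shrink (f:=f) jn hne; rewrite setD1K //.
by apply.
Qed.

End Type1.

Section Type2.
Hypothesis (hI : L1 :&: L2 != set0).

Lemma t2_pay : SA_payoff d L1 L2 f =
  (1 - d) * avg (L1 :&: L2) f + d * avg (L1 :|: L2) f.
Proof. exact: pay_I. Qed.

Lemma t2d j : j \in L2 -> f j <= avg (L1 :&: L2) f.
Proof.
move=> hj.
have e1 : (j |: (L1 :\: L2)) :&: L2 = [set j].
  apply/setP => y; rewrite !inE; case: (eqVneq y j) => [->|hy] /=; first by rewrite hj.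
  by case: (y \in L2); rewrite ?andbF ?andbT.
have e2 : (j |: (L1 :\: L2)) :|: L2 = L1 :|: L2.
  apply/setP => y; rewrite !inE; case: (eqVneq y j) => [->|hy] /=; first by rewrite hj !orbT.
  by case: (y \in L2); case: (y \in L1).
have := hBR (j |: (L1 :\: L2)); rewrite t2_pay pay_I e1 ?set1_neq0 // e2 avg1 => h.
exact: cancel3 hd1 h.
Qed.

Lemma t2e : avg (L1 :|: L2) f <= avg (L1 :&: L2) f.
Proof.
have e1 : (L1 :\: L2) :&: L2 = set0.
  by apply/setP => y; rewrite !inE; case: (y \in L2); rewrite ?andbF.
have e2 : (L1 :\: L2) :|: L2 = L1 :|: L2.
  by apply/setP => y; rewrite !inE; case: (y \in L2); case: (y \in L1).
have hU : (L1 :\: L2) :|: L2 != set0.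
  case/set0Pn: hI => y; rewrite inE => /andP[_ y2]; apply/set0Pn; exists y; by rewrite inE y2 orbT.
have := hBR (L1 :\: L2); rewrite t2_pay pay_I0 // e2 => h.
exact: cancel4 hd1 h.
Qed.

Lemma t2f j : j \notin L1 :|: L2 -> f j <= avg (L1 :|: L2) f.
Proof.
move=> hj.
have hj2 : j \notin L2 by move: hj; rewrite inE negb_or => /andP[].
have e1 : (j |: L1) :&: L2 = L1 :&: L2.
  apply/setP => y; rewrite !inE; case: (eqVneq y j) => [->|hy] /=; first by rewrite (negbTE hj2) andbF.
  by [].
have hU : L1 :|: L2 != set0.
  case/set0Pn: hI => y; rewrite inE => /andP[y1 _]; apply/set0Pn; exists y; by rewrite inE y1.
have := hBR (j |: L1); rewrite t2_pay pay_I e1 // -setUA => h.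
have h' : avg (j |: (L1 :|: L2)) f <= avg (L1 :|: L2) f by exact: cancel5 hd0 h.
exact: avg_grow hj hU h'.
Qed.

Lemma t2g j : j \in L1 -> j \notin L2 -> avg (L1 :|: L2) f <= f j.
Proof.
move=> hj hj2.
have e1 : (L1 :\ j) :&: L2 = L1 :&: L2.
  apply/setP => y; rewrite !inE; case: (eqVneq y j) => [->|hy] /=; first by rewrite (negbTE hj2) andbF.
  by [].
have e2 : (L1 :\ j) :|: L2 = (L1 :|: L2) :\ j.
  apply/setP => y; rewrite !inE; case: (eqVneq y j) => [->|hy] /=; first by rewrite (negbTE hj2).
  by [].
have hne : (L1 :|: L2) :\ j != set0.
  case/set0Pn: hI => y; rewrite inE => /andP[y1 y2]; apply/set0Pn; exists y.
  rewrite !inE y1 andbT; apply/eqP => e; move: y2; by rewrite e (negbTE hj2).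
have := hBR (L1 :\ j); rewrite t2_pay pay_I e1 // e2 => h.
have h' : avg ((L1 :|: L2) :\ j) f <= avg (L1 :|: L2) f by exact: cancel5 hd0 h.
have jU : j \in L1 :|: L2 by rewrite inE hj.
have jn : j \notin (L1 :|: L2) :\ j by rewrite setD11.
have := avg_shrink (f:=f) jn hne; rewrite setD1K //.
by apply.
Qed.

End Type2.
End Game.

Lemma fp_sum (R : realFieldType) (T : finType) (f g : T -> R) (U : {set T}) (b1 b2 : R) :
  U != set0 -> avg U f = b1 -> (forall j, j \notin U -> f j <= b1) ->
  (forall j, j \in U -> b1 <= f j \/ b2 <= g j) -> b1 <= b2 ->
  \sum_j (if b1 <= f j then f j - b1 else 0) <=
  \sum_j (if (f j < b1) && (b1 <= g j) then b1 - f j else 0).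
Proof.
move=> hU hb hout hin h12.
have e : \sum_(j in U) (f j - b1) = 0.
  by rewrite sumrB sumr_const -hb -avg_mul // mulr_natr subrr.
rewrite -subr_le0 -sumrB.
apply: le_trans (_ : _ <= \sum_(j in U) (f j - b1)) _; last by rewrite e.
rewrite [X in _ <= X]big_mkcond /=; apply: ler_sum => j _.
case: (boolP (j \in U)) => hj.
  case: (lerP b1 (f j)) => hf /=; first by rewrite subr0.
  case: (hin j hj) => [hc|hg]; first by move: hf; rewrite ltNge hc.
  have -> : b1 <= g j by apply: le_trans hg.
  by rewrite sub0r opprB.
have := hout j hj.
case: (lerP b1 (f j)) => hf /= hf'; first by rewrite subr0; lra.
case: (b1 <= g j); rewrite ?sub0r ?oppr0 //; lra.
Qed.

Lemma grid_ineq2 (R : realFieldType) (x b : R) (k : nat) :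
  0 <= x <= 2^-1 -> x ^+ 3 - x + 3^-1 = 0 -> (0 < k)%N -> 0 <= b ->
  b < x - (2 * k%:R)^-1 ->
  \sum_(p : Aidx k) (if (@Ak2 R k p < b) && (b <= @Ak1 R k p) then b - @Ak2 R k p else 0) <
  \sum_(p : Aidx k) (if b <= @Ak2 R k p then @Ak2 R k p - b else 0).
Proof.
move=> hx hr k0 b0 bx.
have := grid_ineq hx hr k0 b0 bx.
rewrite /Ak1 /Ak2.
rewrite (@sum_swap _ k (fun c d => if (c%:R / k%:R < b) && (b <= d%:R / k%:R) then b - c%:R / k%:R else 0)).
by rewrite (@sum_swap _ k (fun c d => if b <= c%:R / k%:R then c%:R / k%:R - b else 0)).
Qed.

Lemma Ak_bounds (R : realFieldType) (k : nat) (p : Aidx k) : (0 < k)%N ->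
  [/\ 0 <= @Ak1 R k p, 0 <= @Ak2 R k p & @Ak1 R k p + @Ak2 R k p <= 1].
Proof.
move=> k0; have kpos : 0 < k%:R :> R by rewrite ltr0n.
rewrite /Ak1 /Ak2; split; try by apply: divr_ge0.
rewrite -mulrDl -natrD ler_pdivrMr // mul1r ler_nat.
exact: (valP p).
Qed.

Lemma fp_both (R : realFieldType) (x : R) (k : nat) (U : {set Aidx k}) (b1 b2 : R) :
  0 <= x <= 2^-1 -> x ^+ 3 - x + 3^-1 = 0 -> (0 < k)%N ->
  U != set0 -> avg U (@Ak1 R k) = b1 -> avg U (@Ak2 R k) = b2 ->
  (forall j, j \notin U -> @Ak1 R k j <= b1 /\ @Ak2 R k j <= b2) ->
  (forall j, j \in U -> b1 <= @Ak1 R k j \/ b2 <= @Ak2 R k j) ->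
  x - (2 * k%:R)^-1 <= b1 /\ x - (2 * k%:R)^-1 <= b2.
Proof.
move=> hx hr k0 hU e1 e2 hout hin.
have b10 : 0 <= b1.
  rewrite -e1; apply: avg_ge => // j _; by case: (Ak_bounds R j k0).
have b20 : 0 <= b2.
  rewrite -e2; apply: avg_ge => // j _; by case: (Ak_bounds R j k0).
case: (lerP b1 b2) => h12.
  have hs := fp_sum hU e1 (fun j hj => (hout j hj).1) hin h12.
  have hb1 : x - (2 * k%:R)^-1 <= b1.
    rewrite leNgt; apply/negP => hc.
    have := grid_ineq hx hr k0 b10 hc.
    by rewrite ltNge hs.
  split => //; exact: le_trans h12.
have hin' : forall j, j \in U -> b2 <= @Ak2 R k j \/ b1 <= @Ak1 R k j.
  by move=> j hj; case: (hin j hj); [right|left].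
have hs := fp_sum hU e2 (fun j hj => (hout j hj).2) hin' (ltW h12).
have hb2 : x - (2 * k%:R)^-1 <= b2.
  rewrite leNgt; apply/negP => hc.
  have := grid_ineq2 hx hr k0 b20 hc.
  by rewrite ltNge hs.
split => //; apply: le_trans hb2 (ltW h12).
Qed.

Lemma frontier (R : realFieldType) (k : nat) (m1 m2 : R) : (0 < k)%N -> 0 <= m1 -> 0 <= m2 ->
  (forall p : Aidx k, ~ (m1 < @Ak1 R k p /\ m2 < @Ak2 R k p)) -> 1 - k%:R^-1 <= m1 + m2.
Proof.
move=> k0 h1 h2 hno; rewrite leNgt; apply/negP => hlt.
have kpos : 0 < k%:R :> R by rewrite ltr0n.
set kR := k%:R : R.
have ik : 0 < kR^-1 by rewrite invr_gt0.
have kk : kR / kR = 1 by rewrite divff // lt0r_neq0.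
have ex1 : exists n, m1 < n%:R / kR by exists k; rewrite kk; lra.
have ex2 : exists n, m2 < n%:R / kR by exists k; rewrite kk; lra.
case: (ex_minnP ex1) => c Pc cmin.
case: (ex_minnP ex2) => e Pe emin.
have ck : (c <= k)%N by apply: cmin; rewrite kk; lra.
have ek : (e <= k)%N by apply: emin; rewrite kk; lra.
case: c Pc cmin ck => [|c] Pc cmin ck; first by move: Pc; rewrite mul0r; lra.
case: e Pe emin ek => [|e] Pe emin ek; first by move: Pe; rewrite mul0r; lra.
have hc : c%:R / kR <= m1 by rewrite leNgt; apply/negP => /cmin; rewrite ltnn.
have he : e%:R / kR <= m2 by rewrite leNgt; apply/negP => /emin; rewrite ltnn.
have hce : (c.+1 + e.+1 <= k)%N.
  have : (c + e)%:R < kR - 1 :> R.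
    have : (c%:R + e%:R) / kR < 1 - kR^-1 by rewrite mulrDl; lra.
    rewrite ltr_pdivrMr // mulrBl mul1r mulVf ?lt0r_neq0 //.
    by rewrite natrD.
  rewrite -(ltrD2r 1) subrK natr1 -/kR /kR ltr_nat => h.
  by rewrite addSn addnS.
have hc' : (c.+1 < k.+1)%N by [].
have he' : (e.+1 < k.+1)%N by [].
pose p : Aidx k := exist _ (Ordinal hc', Ordinal he') hce.
by apply: (hno p); rewrite /Ak1 /Ak2 /=.
Qed.

Lemma minkowski (R : realFieldType) (al be r s a1 a2 b1 b2 : R) :
  0 <= al -> 0 <= be -> 0 <= r -> 0 <= s -> a1^+2 + a2^+2 <= r^+2 -> b1^+2 + b2^+2 <= s^+2 ->
  (al*a1 + be*b1)^+2 + (al*a2 + be*b2)^+2 <= (al*r + be*s)^+2.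
Proof.
move=> hal hbe hr hs ha hb.
have lag : (a1*b1 + a2*b2)^+2 <= (a1^+2 + a2^+2) * (b1^+2 + b2^+2).
  have -> : (a1^+2 + a2^+2) * (b1^+2 + b2^+2) = (a1*b1 + a2*b2)^+2 + (a1*b2 - a2*b1)^+2 by ring.
  by rewrite lerDl sqr_ge0.
have cs : (a1*b1 + a2*b2)^+2 <= (r*s)^+2.
  apply: le_trans lag _; rewrite exprMn; apply: ler_pM => //; apply: addr_ge0; exact: sqr_ge0.
have dot : a1*b1 + a2*b2 <= r*s.
  rewrite leNgt; apply/negP => hc.
  have rs0 : 0 <= r * s by apply: mulr_ge0.
  have : (r*s)^+2 < (a1*b1 + a2*b2)^+2 by rewrite !expr2; apply: ltr_pM => //; lra.
  by rewrite ltNge cs.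
have e : (al*a1 + be*b1)^+2 + (al*a2 + be*b2)^+2 =
  al^+2 * (a1^+2 + a2^+2) + 2 * (al * be) * (a1*b1 + a2*b2) + be^+2 * (b1^+2 + b2^+2) by ring.
have e' : (al*r + be*s)^+2 = al^+2 * r^+2 + 2 * (al * be) * (r * s) + be^+2 * s^+2 by ring.
rewrite e e'.
have ab : 0 <= 2 * (al * be) by apply: mulr_ge0 => //; apply: mulr_ge0.
apply: lerD; first apply: lerD.
- by apply: ler_wpM2l => //; exact: sqr_ge0.
- by apply: ler_wpM2l.
- by apply: ler_wpM2l => //; exact: sqr_ge0.
Qed.

Lemma sqrt_le (R : rcfType) (a e : R) : 0 <= e -> a <= e ^+ 2 -> Num.sqrt a <= e.
Proof.
move=> he ha; rewrite -(ger0_norm he) -sqrtr_sqr; exact: ler_wsqrtr.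
Qed.

Lemma geo (R : rcfType) (x : R) (k : nat) (lam eps p1 p2 w1 w2 : R) :
  0 <= x -> x < 2^-1 -> (0 < k)%N -> 0 <= lam <= 1 -> lam + k%:R^-1 <= eps ->
  x - (2 * k%:R)^-1 <= p1 -> x - (2 * k%:R)^-1 <= p2 ->
  1 - k%:R^-1 <= p1 + p2 -> p1 + p2 <= 1 ->
  0 <= w1 -> 0 <= w2 -> w1 + w2 <= 1 ->
  close_to_segment eps (x, 1 - x) (1 - x, x)
    ((1 - lam) * p1 + lam * w1, (1 - lam) * p2 + lam * w2).
Proof.
move=> x0 x1 k0 /andP[l0 l1] he hp1 hp2 hs1 hs2 hw1 hw2 hw.
have kpos : 0 < k%:R :> R by rewrite ltr0n.
set h := (k%:R : R)^-1.
have h0 : 0 < h by rewrite invr_gt0.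
have eh : (2 * k%:R)^-1 = h / 2 by rewrite invfM mulrC.
rewrite eh in hp1 hp2.
have [z [hz1 hz2 he1 he2]] : exists z, [/\ x <= z, z <= 1 - x,
    - (h / 2) <= p1 - z <= h / 2 & - (h / 2) <= p2 - (1 - z) <= h / 2].
  case: (ltrP ((p1 - p2 + 1) / 2) x) => c1.
    exists x; split; try lra; apply/andP; split; lra.
  case: (ltrP (1 - x) ((p1 - p2 + 1) / 2)) => c2.
    exists (1 - x); split; try lra; apply/andP; split; lra.
  exists ((p1 - p2 + 1) / 2); split; try lra; apply/andP; split; lra.
set z' := (1 - lam) * z + lam / 2.
have hz'1 : x <= z'.
  have : (1 - lam) * x <= (1 - lam) * z by apply: ler_wpM2l; lra.
  have : lam * x <= lam * 2^-1 by apply: ler_wpM2l; lra.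
  rewrite /z'; lra.
have hz'2 : z' <= 1 - x.
  have : (1 - lam) * z <= (1 - lam) * (1 - x) by apply: ler_wpM2l; lra.
  have : lam * 2^-1 <= lam * (1 - x) by apply: ler_wpM2l; lra.
  rewrite /z'; lra.
have d0 : 0 < 1 - 2 * x by lra.
exists ((1 - x - z') / (1 - 2 * x)); split.
  apply/andP; split; first by apply: divr_ge0; lra.
  by rewrite ler_pdivrMr // mul1r; lra.
rewrite /dist2 /=.
have c1 : (1 - x - z') / (1 - 2 * x) * x + (1 - (1 - x - z') / (1 - 2 * x)) * (1 - x) = z'.
  by field; lra.
have c2 : (1 - x - z') / (1 - 2 * x) * (1 - x) + (1 - (1 - x - z') / (1 - 2 * x)) * x = 1 - z'.
  by field; lra.
rewrite c1 c2.
have q1 : (1 - lam) * p1 + lam * w1 - z' = (1 - lam) * (p1 - z) + lam * (w1 - 2^-1) by rewrite /z'; field.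
have q2 : (1 - lam) * p2 + lam * w2 - (1 - z') = (1 - lam) * (p2 - (1 - z)) + lam * (w2 - 2^-1) by rewrite /z'; field.
rewrite q1 q2.
have ep : 0 <= (1 - lam) * h + lam * 1.
  apply: addr_ge0; apply: mulr_ge0; lra.
have eps0 : (1 - lam) * h + lam * 1 <= eps.
  have : (1 - lam) * h <= h by rewrite ler_piMl //; lra.
  lra.
apply: sqrt_le; first lra.
apply: le_trans (_ : _ <= ((1 - lam) * h + lam * 1) ^+ 2) _; last first.
  by rewrite !expr2; apply: ler_pM => //.
apply: minkowski; try lra.
- idtac.
  have sq : forall a c : R, - c <= a <= c -> a ^+ 2 <= c ^+ 2.
    move=> a c /andP[u v]; rewrite -subr_ge0.
    have -> : c ^+ 2 - a ^+ 2 = (c - a) * (c + a) by ring.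
    apply: mulr_ge0; lra.
  have := sq _ _ he1; have := sq _ _ he2.
  have -> : (h/2) ^+ 2 = h^+2 / 4 by field.
  have : 0 <= h ^+ 2 by apply: sqr_ge0.
  lra.
- have sq : forall a c : R, - c <= a <= c -> a ^+ 2 <= c ^+ 2.
    move=> a c /andP[u v]; rewrite -subr_ge0.
    have -> : c ^+ 2 - a ^+ 2 = (c - a) * (c + a) by ring.
    apply: mulr_ge0; lra.
  have : (w1 - 2^-1) ^+ 2 <= (2^-1) ^+ 2 by apply: sq; apply/andP; split; lra.
  have : (w2 - 2^-1) ^+ 2 <= (2^-1) ^+ 2 by apply: sq; apply/andP; split; lra.
  have -> : (2^-1 : R) ^+ 2 = 4^-1 by field.
  rewrite expr1n; lra.
Qed.

Lemma pay_lin (R : realFieldType) (T : finType) (d : R) (L1 L2 : {set T}) (f g : T -> R) :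
  SA_payoff d L1 L2 f + SA_payoff d L1 L2 g = SA_payoff d L1 L2 (fun t => f t + g t).
Proof.
rewrite /SA_payoff !avgD.
by case: ((L1 == set0) && (L2 == set0)) => //; case: (L1 :&: L2 == set0) => //; ring.
Qed.

Lemma pay_01 (R : realFieldType) (T : finType) (d : R) (L1 L2 : {set T}) (f : T -> R) :
  0 <= d <= 1 -> (forall j, 0 <= f j <= 1) -> 0 <= SA_payoff d L1 L2 f <= 1.
Proof.
move=> /andP[d0 d1] hf; rewrite /SA_payoff.
case: ((L1 == set0) && (L2 == set0)); first exact: avg_01.
case: (L1 :&: L2 == set0); first exact: avg_01.
move/andP: (avg_01 (L1 :&: L2) hf) => [a0 a1].
move/andP: (avg_01 (L1 :|: L2) hf) => [b0 b1].
apply/andP; split; first by apply: addr_ge0; apply: mulr_ge0; lra.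
have : (1 - d) * avg (L1 :&: L2) f <= (1 - d) * 1 by apply: ler_wpM2l; lra.
have : d * avg (L1 :|: L2) f <= d * 1 by apply: ler_wpM2l.
lra.
Qed.

Theorem proposition1 (R : rcfType) (x : R)
  (hx : 0 <= x <= 2^-1) (hroot : x ^+ 3 - x + 3^-1 = 0)
  (k : nat) (hk : (0 < k)%N) (delta : R) (hd : 0 < delta <= 1)
  (L1 L2 : {set Aidx k}) :
  SA_pure_NE delta (@Ak1 R k) (@Ak2 R k) L1 L2 ->
  close_to_segment (delta + k%:R^-1) (x, 1 - x) (1 - x, x)
    (SA_payoff delta L1 L2 (@Ak1 R k), SA_payoff delta L1 L2 (@Ak2 R k)).
Proof.
move=> [hN1 hN2].
have x25 := xle hx hroot.
have xlt : x < 2^-1 by lra.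
move: (hx) => /andP[x0 _].
have kpos : 0 < k%:R :> R by rewrite ltr0n.
have hinv : 0 < k%:R^-1 :> R by rewrite invr_gt0.
have hinv2 : 0 < (2 * k%:R)^-1 :> R by rewrite invr_gt0; lra.
have hBR2 : forall L2', SA_payoff delta L2' L1 (@Ak2 R k) <= SA_payoff delta L2 L1 (@Ak2 R k).
  by move=> L2'; rewrite !(pay_sym delta _ L1); exact: hN2.
move: hd => /andP[hd0 hd1].
have b01 : forall p : Aidx k, 0 <= @Ak1 R k p <= 1.
  by move=> p; case: (Ak_bounds R p hk) => a b c; apply/andP; split => //; lra.
have b02 : forall p : Aidx k, 0 <= @Ak2 R k p <= 1.
  by move=> p; case: (Ak_bounds R p hk) => a b c; apply/andP; split => //; lra.
have b03 : forall p : Aidx k, 0 <= @Ak1 R k p + @Ak2 R k p <= 1.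
  by move=> p; case: (Ak_bounds R p hk) => a b c; apply/andP; split => //; lra.
case: (eqVneq delta 1) => hdl.
  have hd01 : 0 <= delta <= 1 by apply/andP; split; lra.
  have [u10 u11] := andP (pay_01 L1 L2 hd01 b01).
  have [u20 u21] := andP (pay_01 L1 L2 hd01 b02).
  have [u30 u31] := andP (pay_01 L1 L2 hd01 b03).
  rewrite -pay_lin in u31.
  have := @geo R x k 1 (delta + k%:R^-1) (2^-1) (2^-1) (SA_payoff delta L1 L2 (@Ak1 R k)) (SA_payoff delta L1 L2 (@Ak2 R k)) x0 xlt hk.
  rewrite subrr !mul0r !add0r !mul1r; apply; try lra.
have hd1' : delta < 1 by rewrite lt_neqAle hdl hd1.
case: (boolP ((L1 == set0) && (L2 == set0))) => hE.
  exfalso; move/andP: hE => [/eqP e1 /eqP e2]; subst L1 L2.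
  have h0 : (k + 0 <= k)%N by rewrite addn0.
  pose j0 : Aidx k := exist _ (ord_max, ord0) h0.
  have := hN1 [set j0].
  rewrite pay_I0 ?setI0 ?setU0 ?set1_neq0 // avg1 /SA_payoff eqxx /=.
  have -> : @Ak1 R k j0 = 1 by rewrite /Ak1 /= divff // lt0r_neq0.
  move=> h1.
  have h00 : (0 + 0 <= k)%N by [].
  pose j1 : Aidx k := exist _ (ord0, ord0) h00.
  have hs : forall j, j \in [set: Aidx k] -> @Ak1 R k j <= avg [set: Aidx k] (@Ak1 R k).
    by move=> j _; have := b01 j; lra.
  have := avg_eq hs (in_setT j1).
  rewrite {1}/Ak1 /= mul0r => h2; move: h1; rewrite -h2; lra.
have hU : L1 :|: L2 != set0.
  apply: contra hE => /eqP h; apply/andP; split; apply/eqP; apply/setP => y;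
    move/setP: (h) => /(_ y); rewrite !inE /=;
    by case: (y \in L1); case: (y \in L2).
have hU2 : L2 :|: L1 != set0 by rewrite setUC.
have hfr : forall m1 m2 : R, 0 <= m1 -> 0 <= m2 ->
    x - (2 * k%:R)^-1 <= m1 -> x - (2 * k%:R)^-1 <= m2 ->
    1 - k%:R^-1 <= m1 + m2 -> m1 + m2 <= 1 -> forall lam w1 w2 : R, 0 <= lam <= 1 -> lam <= delta ->
    0 <= w1 -> 0 <= w2 -> w1 + w2 <= 1 ->
    close_to_segment (delta + k%:R^-1) (x, 1 - x) (1 - x, x)
      ((1 - lam) * m1 + lam * w1, (1 - lam) * m2 + lam * w2).
  move=> m1 m2 hm1 hm2 hx1 hx2 hs1 hs2 lam w1 w2 hl hld hw1 hw2 hw.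
  apply: (geo x0 xlt hk hl) => //; lra.
case: (eqVneq (L1 :&: L2) set0) => hI.
  have hI2 : L2 :&: L1 = set0 by rewrite setIC.
  have eu1 := t1_pay delta (@Ak1 R k) hI hU.
  have eu2 : SA_payoff delta L1 L2 (@Ak2 R k) = avg (L1 :|: L2) (@Ak2 R k).
    by rewrite pay_sym (t1_pay delta _ hI2 hU2) setUC.
  rewrite eu1 eu2.
  set u1 := avg (L1 :|: L2) (@Ak1 R k); set u2 := avg (L1 :|: L2) (@Ak2 R k).
  have a1 := t1a hd1' hN1 hI hU.
  have a2 : forall j, j \in L1 -> @Ak2 R k j <= u2.
    by move=> j hj; rewrite /u2 setUC; exact: (t1a hd1' hBR2 hI2 hU2 hj).
  have c1 := t1b hN1 hI hU.
  have c2 : forall j, j \notin L1 :|: L2 -> @Ak2 R k j <= u2.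
    by move=> j hj; rewrite /u2 setUC; apply: (t1b hBR2 hI2 hU2); rewrite setUC.
  have e1 := t1c hN1 hI hU.
  have e2 : forall j, j \in L2 -> (L1 :|: L2) :\ j != set0 -> u2 <= @Ak2 R k j.
    by move=> j hj hne; rewrite /u2 setUC; apply: (t1c hBR2 hI2 hU2 hj); rewrite setUC.
  have [hb1 hb2] : x - (2 * k%:R)^-1 <= u1 /\ x - (2 * k%:R)^-1 <= u2.
    apply: (fp_both hx hroot hk hU) => //.
      by move=> j hj; split; [exact: c1|exact: c2].
    move=> j hj; case: (eqVneq ((L1 :|: L2) :\ j) set0) => hne.
      have eU : L1 :|: L2 = [set j].
        apply/setP => y; rewrite inE; apply/idP/eqP => [hy|->//].
        apply/eqP; apply: contraT => hyj.
        have : y \in (L1 :|: L2) :\ j by rewrite in_setD1 hyj hy.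
        by rewrite hne inE.
      by left; rewrite /u1 eU avg1.
    move: (hj); rewrite inE => /orP[h|h]; first by left; exact: e1.
    by right; exact: e2.
  rewrite -/u1 in a1 c1 e1.
  have [u10 _] := andP (avg_01 (L1 :|: L2) b01).
  have [u20 _] := andP (avg_01 (L1 :|: L2) b02).
  have [_ u31] := andP (avg_01 (L1 :|: L2) b03).
  rewrite avgD in u31.
  have hs : 1 - k%:R^-1 <= u1 + u2.
    apply: frontier => // p [h1 h2].
    case: (boolP (p \in L1)) => hp1; first by have := a2 p hp1; lra.
    case: (boolP (p \in L2)) => hp2; first by have := a1 p hp2; lra.
    have : p \notin L1 :|: L2 by rewrite inE negb_or hp1 hp2.
    by move/c1; lra.
  have := hfr u1 u2 u10 u20 hb1 hb2 hs u31 0 (2^-1) (2^-1).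
  rewrite subr0 !mul1r !mul0r !addr0; apply; try lra.
have hI2 : L2 :&: L1 != set0 by rewrite setIC.
have eu1 := t2_pay delta (@Ak1 R k) hI.
have eu2 : SA_payoff delta L1 L2 (@Ak2 R k) =
    (1 - delta) * avg (L1 :&: L2) (@Ak2 R k) + delta * avg (L1 :|: L2) (@Ak2 R k).
  by rewrite pay_sym (t2_pay delta _ hI2) setUC setIC.
rewrite eu1 eu2.
set m1 := avg (L1 :&: L2) (@Ak1 R k); set m2 := avg (L1 :&: L2) (@Ak2 R k).
set B1 := avg (L1 :|: L2) (@Ak1 R k); set B2 := avg (L1 :|: L2) (@Ak2 R k).
have d1 := t2d hd1' hN1 hI.
have d2 : forall j, j \in L1 -> @Ak2 R k j <= m2.
  by move=> j hj; rewrite /m2 setIC; exact: (t2d hd1' hBR2 hI2 hj).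
have e1 := t2e hd1' hN1 hI.
have e2 : B2 <= m2 by rewrite /B2 /m2 setIC setUC; exact: (t2e hd1' hBR2 hI2).
have f1 := t2f hd0 hN1 hI.
have f2 : forall j, j \notin L1 :|: L2 -> @Ak2 R k j <= B2.
  by move=> j hj; rewrite /B2 setUC; apply: (t2f hd0 hBR2 hI2); rewrite setUC.
have g1 := t2g hd0 hN1 hI.
have g2 : forall j, j \in L2 -> j \notin L1 -> B2 <= @Ak2 R k j.
  by move=> j hj hj'; rewrite /B2 setUC; exact: (t2g hd0 hBR2 hI2 hj hj').
have eI1 : forall j, j \in L1 :&: L2 -> @Ak1 R k j = m1.
  apply: avg_eq => j; rewrite inE => /andP[_ h]; exact: d1.
have eI2 : forall j, j \in L1 :&: L2 -> @Ak2 R k j = m2.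
  apply: avg_eq => j; rewrite inE => /andP[h _]; exact: d2.
case/set0Pn: (hI) => p0 hp0.
have [hb1 hb2] : x - (2 * k%:R)^-1 <= B1 /\ x - (2 * k%:R)^-1 <= B2.
  apply: (fp_both hx hroot hk hU) => //.
    by move=> j hj; split; [exact: f1|exact: f2].
  move=> j hj.
  case: (boolP (j \in L1)) => h1; case: (boolP (j \in L2)) => h2.
  - by left; rewrite eI1 ?inE ?h1 ?h2.
  - by left; exact: g1.
  - by right; exact: g2.
  - by move: hj; rewrite inE (negbTE h1) (negbTE h2).
have m10 : 0 <= m1 by rewrite -(eI1 p0 hp0); case/andP: (b01 p0).
have m20 : 0 <= m2 by rewrite -(eI2 p0 hp0); case/andP: (b02 p0).
have ms : m1 + m2 <= 1 by rewrite -(eI1 p0 hp0) -(eI2 p0 hp0); case/andP: (b03 p0).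
have [B10 _] := andP (avg_01 (L1 :|: L2) b01).
have [B20 _] := andP (avg_01 (L1 :|: L2) b02).
have [_ B31] := andP (avg_01 (L1 :|: L2) b03).
rewrite avgD in B31.
rewrite -/m1 -/B1 in d1 e1 f1 g1 eI1.
have hs : 1 - k%:R^-1 <= m1 + m2.
  apply: frontier => // p [h1 h2].
  case: (boolP (p \in L2)) => hp2; first by have := d1 p hp2; lra.
  case: (boolP (p \in L1)) => hp1; first by have := d2 p hp1; lra.
  have : p \notin L1 :|: L2 by rewrite inE negb_or hp1 hp2.
  by move/f1; lra.
apply: (hfr m1 m2) => //; try lra.
Qed.
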